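(* Let $C_2\subseteq C_1\subseteq\mathbb{F}_2^n$ be linear codes with bases $\beta_2\subseteq\beta_1$, respectively, and $Q=Q(C_1,C_2)$ the corresponding CSS code. If $N=2^\ell$ ($\ell$ a positive integer), then $$H_N=\left(\beta_2\star\bigcup_{i=0}^{\ell-1}\left(2^i\beta_1^{(i)}\right)\right)^{\perp_N}.$$
   Context: Elements of $\mathbb{F}_2^n$ are identified with vectors in $\{0,1\}^n\subseteq\mathbb{Z}_N^n$. $\omega=e^{2\pi\mathbf{i}/N}$, $U(a)=\mathrm{diag}(1,\omega^a)$ for $a\in\mathbb{Z}_N$ and $U(b)=\bigotimes_{i=1}^nU(b_i)$ for $b\in\mathbb{Z}_N^n$. $Q(C_1,C_2)$ is the subspace of $(\mathbb{C}^2)^{\otimes n}$ stabilized by all $X(u)Z(v)$, $u\in C_2$, $v\in C_1^\perp$, where $X(u)=\bigotimes X^{u_i}$, $Z(v)=\bigotimes Z^{v_i}$ with $X,Z$ the Pauli matrices. $H_N=\{b\in\mathbb{Z}_N^n: U(b)Q=Q\}$. For $u,v\in\mathbb{Z}_N^n$, $u\star v$ is the componentwise product. For a set $A$ of vectors and $r\ge1$, $A^{(r)}=\{v_1\star\cdots\star v_r: v_i\in A,\ v_i\neq v_j \text{ for } i\neq j\}$ and $A^{(0)}=\{(1,\ldots,1)\}$; $2^iA=\{2^ia:a\in A\}$; for sets $A,B$, $A\star B=\{a\star b: a\in A, b\in B\}$; and $A^{\perp_N}=\{w\in\mathbb{Z}_N^n: v\cdot w=0 \bmod N\ \forall v\in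 A\}$. *)

(* Defs.v *)
From HB Require Import structures.
From mathcomp Require Import all_boot all_order all_algebra.
From mathcomp Require Import complex.
From mathcomp Require Import reals trigo.
Set Implicit Arguments. Unset Strict Implicit. Unset Printing Implicit Defensive.
Import Order.TTheory GRing.Theory Num.Theory.
Local Open Scope ring_scope.
Local Open Scope complex_scope.

(* Vectors of F_2^n are row vectors 'rV['F_2]_n; they also index the
   computational basis of (C^2)^{\otimes n}. States are functions on this basis. *)
Definition state (R : realType) (n : nat) := {ffun 'rV['F_2]_n -> R[i]}.

Definition omega (R : realType) (N : nat) : R[i] :=
  (cos (2 * pi / N%:R))%:C + 'i * (sin (2 * pi / N%:R))%:C.

(* X(u) = tensor of X^{u_i}:  (X(u) psi)(x) = psi(x + u) *)
Definition Xop (R : realType) n (u : 'rV['F_2]_n) (psi : state R n) : state R n :=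
  [ffun x : 'rV['F_2]_n => psi (x + u)].

(* Z(v) = tensor of Z^{v_i}: diagonal with entry prod_i (-1)^{v_i x_i} *)
Definition Zop (R : realType) n (v : 'rV['F_2]_n) (psi : state R n) : state R n :=
  [ffun x : 'rV['F_2]_n => (\prod_(i < n) (if (v 0 i != 0) && (x 0 i != 0) then -1 else 1)) * psi x].

(* U(b) = tensor of diag(1, omega^{b_i}) *)
Definition Uop (R : realType) n (N : nat) (b : 'rV['Z_N]_n) (psi : state R n) : state R n :=
  [ffun x : 'rV['F_2]_n => (\prod_(i < n) (if x 0 i != 0 then omega R N ^+ (val (b 0 i)) else 1)) * psi x].

Definition dual2 n (C : {vspace 'rV['F_2]_n}) (v : 'rV['F_2]_n) : Prop :=
  forall c, c \in C -> \sum_(i < n) v 0 i * c 0 i = 0.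

Definition CSS (R : realType) n (C1 C2 : {vspace 'rV['F_2]_n}) (psi : state R n) : Prop :=
  forall u v, u \in C2 -> dual2 C1 v -> Xop u (Zop v psi) = psi.

(* H_N = { b in Z_N^n | U(b) Q = Q } *)
Definition HN (R : realType) n (N : nat) (C1 C2 : {vspace 'rV['F_2]_n}) (b : 'rV['Z_N]_n) : Prop :=
  forall phi : state R n, CSS C1 C2 phi <-> exists2 psi, CSS C1 C2 psi & phi = Uop b psi.

(* identification F_2^n  ~  {0,1}^n  inside  Z_N^n *)
Definition liftN n (N : nat) (v : 'rV['F_2]_n) : 'rV['Z_N]_n :=
  \row_i ((val (v 0 i))%:R : 'Z_N).

Definition star n (N : nat) (u v : 'rV['Z_N]_n) : 'rV['Z_N]_n := \row_i (u 0 i * v 0 i).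

Definition onesN n (N : nat) : 'rV['Z_N]_n := \row_i 1.

(* A^{(r)} for a set A of F_2-vectors (lifted to Z_N^n): products of r pairwise distinct
   elements of A;  A^{(0)} = {(1,...,1)}. *)
Definition starpow n (N : nat) (A : seq 'rV['F_2]_n) (r : nat) (w : 'rV['Z_N]_n) : Prop :=
  exists s : seq 'rV['F_2]_n,
    [/\ size s = r, uniq s, {subset s <= A} & w = foldr (@star n N) (onesN n N) (map (@liftN n N) s)].

Definition genset n (l : nat) (b1 b2 : seq 'rV['F_2]_n) (w : 'rV['Z_(2 ^ l)]_n) : Prop :=
  exists a i p, [/\ a \in b2, (i < l)%N, starpow b1 i p & w = star (liftN (2 ^ l) a) (p *+ (2 ^ i))].

Definition perpN n (N : nat) (A : 'rV['Z_N]_n -> Prop) (w : 'rV['Z_N]_n) : Prop :=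
  forall v, A v -> \sum_(i < n) v 0 i * w 0 i = 0.
Arguments genset {n} l b1 b2 w.

(* Main.v *)
Require Import Defs.
From HB Require Import structures.
From mathcomp Require Import all_boot all_order all_algebra.
From mathcomp Require Import complex.
From mathcomp Require Import reals trigo.
From mathcomp Require Import ring lra.
Import Order.TTheory GRing.Theory Num.Theory.
Local Open Scope ring_scope.
Local Open Scope complex_scope.
Set Implicit Arguments. Unset Strict Implicit. Unset Printing Implicit Defensive.

Lemma omega_cs (R : realType) N : omega R N = Complex (cos (2 * pi / N%:R)) (sin (2 * pi / N%:R)).
Proof. apply/eqP; by rewrite eq_complex /= ?mul0r ?mul1r ?mulr0 ?subr0 ?addr0 ?add0r ?eqxx. Qed.

Lemma omegaX (R : realType) N m : omega R N ^+ m = Complex (cos (m%:R * (2 * pi / N%:R))) (sin (m%:R * (2 * pi / N%:R))).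
Proof.
elim: m => [|m IH]. by rewrite expr0 mul0r cos0 sin0.
rewrite exprS IH omega_cs; set t := (2 * pi / N%:R).
apply/eqP; rewrite eq_complex /= -addn1 natrD mulrDl mul1r addrC cosD sinD.
by apply/andP; split; apply/eqP; ring.
Qed.

Lemma omegaN (R : realType) N : (0 < N)%N -> omega R N ^+ N = 1.
Proof.
move=> N0; rewrite omegaX mulrCA mulfV ?pnatr_eq0 -?lt0n // mulr1 mulr_natl.
by rewrite cos2pi sin2pi.
Qed.

Lemma omega_prim (R : realType) N m : (0 < m)%N -> (m < N)%N -> omega R N ^+ m != 1.
Proof.
move=> m0 mN; rewrite omegaX; apply/negP => /eqP [] Hc _.
set x := pi * (m%:R / N%:R) : R.
have Hx : m%:R * (2 * pi / N%:R) = x *+ 2 :> R.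
  rewrite /x mulr2n; field. by rewrite pnatr_eq0 -lt0n (leq_ltn_trans _ mN).
move: Hc; rewrite Hx cos_mulr2n => Hc.
have hc : cos x ^+ 2 = 1.
  move: Hc; set c := cos x ^+ 2; rewrite mulr2n => Hc; lra.
have hs : sin x = 0.
  have : sin x ^+ 2 == 0 by rewrite sin2cos2 hc subrr.
  by rewrite expf_eq0 => /andP[_ /eqP].
have : 0 < sin x.
  apply: sin_gt0_pi; apply/andP; split.
    by rewrite /x mulr_gt0 ?pi_gt0 // divr_gt0 // ltr0n // (leq_ltn_trans _ mN).
  rewrite /x -[X in _ < X]mulr1 ltr_pM2l ?pi_gt0 // ltr_pdivrMr ?mul1r ?ltr_nat //.
  by rewrite ltr0n (leq_ltn_trans _ mN).
by rewrite hs ltxx.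
Qed.

Section Chi.
Variables (R : realType) (N : nat).
Hypothesis N1 : (1 < N)%N.
Definition chi (z : 'Z_N) : R[i] := omega R N ^+ val z.

Lemma omega_mod m : omega R N ^+ (m %% N) = omega R N ^+ m.
Proof.
by rewrite {2}(divn_eq m N) exprD mulnC exprM omegaN ?expr1n ?mul1r // ltnW.
Qed.

Lemma valZpD (z1 z2 : 'Z_N) : val (z1 + z2) = ((val z1 + val z2) %% N)%N.
Proof. rewrite /=; congr (_ %% _)%N; exact: Zp_cast. Qed.

Lemma chiD z1 z2 : chi (z1 + z2) = chi z1 * chi z2.
Proof. by rewrite /chi valZpD omega_mod exprD. Qed.

Lemma chi0 : chi 0 = 1.
Proof. by rewrite /chi expr0. Qed.

Lemma valZp_lt (z : 'Z_N) : (val z < N)%N.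
Proof. by apply: leq_trans (ltn_ord z) _; rewrite Zp_cast. Qed.

Lemma omega_neq0 : omega R N != 0.
Proof.
apply/negP=> /eqP H; have := @omegaN R N (ltnW N1); rewrite H expr0n.
by case: N N1 => //= _ _ /eqP; rewrite eq_sym oner_eq0.
Qed.

Lemma chi_inj : injective chi.
Proof.
have key : forall z1 z2 : 'Z_N, (val z1 <= val z2)%N -> chi z1 = chi z2 -> z1 = z2.
  move=> z1 z2 le12; rewrite /chi -(subnKC le12) exprD => H.
  apply: val_inj => /=; rewrite -(subnKC le12).
  case: (posnP (val z2 - val z1)%N) => [->|pos]; first by rewrite addn0.
  exfalso; move: H.
  have /omega_prim/negP : (val z2 - val z1 < N)%N.
    by apply: leq_ltn_trans (leq_subr _ _) (valZp_lt _).
  move/(_ R pos) => Hne /eqP; rewrite -subr_eq0 -{1}[omega R N ^+ val z1]mulr1 -mulrBr mulf_eq0.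
  rewrite expf_eq0 (negbTE omega_neq0) andbF /= subr_eq0 eq_sym; exact: Hne.
move=> z1 z2; case: (leqP (val z1) (val z2)) => [le|/ltnW le] H; first exact: key.
by apply/esym/key.
Qed.
End Chi.

Lemma F2_cases (x : 'F_2) : x = 0 \/ x = 1.
Proof. case: x => [[|[|k]]] Hk; [left|right|by []]; exact: val_inj. Qed.

Lemma F2span_ind n (s : seq 'rV['F_2]_n) (P : 'rV['F_2]_n -> Prop) :
  P 0 -> (forall g y, g \in s -> P y -> P (g + y)) ->
  forall x, x \in <<s>>%VS -> P x.
Proof.
move=> P0 PS x /(@coord_span _ _ _ (in_tuple s)) ->.
elim/big_rec: _ => // i y _ Py.
case: (F2_cases (coord (in_tuple s) i x)) => ->; first by rewrite scale0r add0r.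
rewrite scale1r; apply: PS => //; exact: mem_nth.
Qed.

Lemma zero2 l m (z : 'Z_(2 ^ l)) : (0 < l)%N -> (l <= m)%N -> z *+ 2 ^ m = 0.
Proof.
move=> l0 lm; rewrite -mulr_natr -(subnKC lm) expnD natrM pchar_Zp ?mul0r ?mulr0 //.
by rewrite -{1}(expn0 2) ltn_exp2l.
Qed.

Section Z.
Variables (n N : nat).
Implicit Types (u v w p : 'rV['Z_N]_n).
Definition dot (u w : 'rV['Z_N]_n) := \sum_(i < n) u 0 i * w 0 i.

Lemma dot_lift_add (x y : 'rV['F_2]_n) w :
  dot (liftN N (x + y)) w = dot (liftN N x) w + dot (liftN N y) w
     - dot (liftN N y) (star (liftN N x) w) *+ 2.
Proof.
rewrite /dot -sumrMnl.
have -> : forall A B C : 'I_n -> 'Z_N, \sum_i A i + \sum_i B i - \sum_i C i = \sum_i (A i + B i - C i).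
  by move=> A B C; rewrite sumrB big_split.
apply: eq_bigr => i _; rewrite !mxE.
have v0 : val (0 : 'F_2) = 0%N by [].
have v1 : val (1 : 'F_2) = 1%N by [].
have v11 : val (1 + 1 : 'F_2) = 0%N by [].
case: (F2_cases (x 0 i)) => ->; case: (F2_cases (y 0 i)) => ->;
  rewrite ?v11 ?addr0 ?add0r ?v0 ?v1; ring.
Qed.

Lemma dot_starC (u v w : 'rV['Z_N]_n) : dot (star u v) w = dot v (star u w).
Proof. by apply: eq_bigr => i _; rewrite !mxE; ring. Qed.

Lemma dot_ones w : dot (onesN n N) w = \sum_(i < n) w 0 i.
Proof. by apply: eq_bigr => i _; rewrite !mxE mul1r. Qed.

Lemma star_onesl w : star (onesN n N) w = w.
Proof. by apply/rowP => i; rewrite !mxE mul1r. Qed.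

Lemma star_onesr w : star w (onesN n N) = w.
Proof. by apply/rowP => i; rewrite !mxE mulr1. Qed.

Lemma starA u v w : star u (star v w) = star (star u v) w.
Proof. by apply/rowP => i; rewrite !mxE mulrA. Qed.

Lemma starC u v : star u v = star v u.
Proof. by apply/rowP => i; rewrite !mxE mulrC. Qed.

Lemma star_lift_id (x : 'rV['F_2]_n) : star (liftN N x) (liftN N x) = liftN N x.
Proof. apply/rowP => i; rewrite !mxE.
have v0 : val (0 : 'F_2) = 0%N by [].
have v1 : val (1 : 'F_2) = 1%N by [].
by case: (F2_cases (x 0 i)) => ->; rewrite ?v0 ?v1 ?mulr0 ?mulr1. Qed.

Lemma lift0 : liftN N (0 : 'rV['F_2]_n) = 0.
Proof. by apply/rowP => i; rewrite !mxE. Qed.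

Lemma dot0l w : dot 0 w = 0.
Proof. by rewrite /dot big1 // => i _; rewrite mxE mul0r. Qed.

Lemma dot_starMn u p k w : dot (star u (p *+ k)) w = dot p (star u w) *+ k.
Proof. rewrite /dot -sumrMnl; apply: eq_bigr => i _; rewrite !mxE mulmxnE mulrnAr mulrnAl; congr (_ *+ _); ring. Qed.
End Z.

Section Comb.
Variables (n l : nat) (l0 : (0 < l)%N) (C1 : {vspace 'rV['F_2]_n}) (beta1 : seq 'rV['F_2]_n).
Hypothesis span1 : <<beta1>>%VS = C1.

Definition prodL (s : seq 'rV['F_2]_n) : 'rV['Z_(2^l)]_n :=
  foldr (@star n (2^l)) (onesN n (2^l)) (map (@liftN n (2^l)) s).
Definition Sp (w : 'rV['Z_(2^l)]_n) m := forall x, x \in C1 -> dot (liftN (2^l) x) w *+ 2^m = 0.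
Definition Rr (w : 'rV['Z_(2^l)]_n) m :=
  forall s, {subset s <= beta1} -> dot (prodL s) w *+ 2^(m + size s) = 0.

Lemma Rdec w m : Rr w m <-> dot (onesN n (2^l)) w *+ 2^m = 0 /\ forall g, g \in beta1 -> Rr (star (liftN (2^l) g) w) m.+1.
Proof.
split.
- move=> H; split; first by have := H [::]; rewrite addn0; apply.
  move=> g gb s ss; have := H (g :: s); rewrite /= dot_starC -addSnnS; apply.
  by move=> x; rewrite inE => /orP[/eqP ->|/ss].
- move=> [H0 H] [|g s] ss /=; first by rewrite addn0.
  rewrite dot_starC -addSnnS; apply: H; first by apply: ss; rewrite inE eqxx.
  by move=> x xs; apply: ss; rewrite inE xs orbT.
Qed.

Lemma Rec w m : Sp w m <-> (forall g, g \in beta1 -> dot (liftN (2^l) g) w *+ 2^m = 0) /\ (forall g, g \in beta1 -> Sp (star (liftN (2^l) g) w) m.+1).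
Proof.
have gC : forall g, g \in beta1 -> g \in C1 by move=> g gb; rewrite -span1 memv_span.
split.
- move=> H; split=> [g gb|g gb x xC]; first exact/H/gC.
  have := H (g + x) (memvD (gC _ gb) xC).
  rewrite dot_lift_add mulrnBl mulrnDl (H g (gC _ gb)) (H x xC) addr0 sub0r -mulrnA -expnS.
  by move/eqP; rewrite oppr_eq0 => /eqP.
- move=> [H1 H2] x; rewrite -span1.
  have : forall y, y \in <<beta1>>%VS -> y \in C1 /\ dot (liftN (2^l) y) w *+ 2^m = 0.
    apply: (F2span_ind (P := fun y => y \in C1 /\ dot (liftN (2^l) y) w *+ 2^m = 0)) => [|g y gb [yC Py]]; first by rewrite mem0v lift0 dot0l mul0rn.
    split; first exact: memvD (gC _ gb) yC.
    by rewrite dot_lift_add mulrnBl mulrnDl (H1 g gb) Py addr0 -mulrnA -expnS (H2 g gb y yC) subr0.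
  by move=> Hx /Hx [].
Qed.

Lemma Klem k : forall w m, (l <= m + k)%N ->
  (Sp w m <-> forall g, g \in beta1 -> Rr (star (liftN (2^l) g) w) m).
Proof.
elim: k => [|k IH] w m.
  rewrite addn0 => lm; split=> _.
    by move=> g gb s ss; apply: zero2 => //; apply: leq_trans lm (leq_addr _ _).
  by move=> x xC; apply: zero2.
move=> lmk; rewrite Rec.
have IH' : forall w', Sp w' m.+1 <-> forall g, g \in beta1 -> Rr (star (liftN (2^l) g) w') m.+1.
  by move=> w'; apply: IH; rewrite addSnnS.
split.
- move=> [H1 H2] g gb; apply/Rdec; split.
    by rewrite -dot_starC star_onesr; apply: H1.
  by apply/IH'; apply: H2.
- move=> H; split=> g gb; have /Rdec [Ha Hb] := H g gb.
    by move: Ha; rewrite -dot_starC star_onesr.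
  by apply/IH'.
Qed.
End Comb.

Section Perp.
Variables (n l : nat) (l0 : (0 < l)%N) (beta1 beta2 : seq 'rV['F_2]_n).

Lemma prodL_mem (s : seq 'rV['F_2]_n) x : x \in s ->
  star (liftN (2^l) x) (prodL l s) = prodL l s.
Proof.
elim: s => [//|y s IH]; rewrite inE => /orP[/eqP ->|xs] /=.
  by rewrite starA star_lift_id.
by rewrite starA (starC (liftN _ x)) -starA IH.
Qed.

Lemma prodL_undup (s : seq 'rV['F_2]_n) : prodL l (undup s) = prodL l s.
Proof.
have pc : forall x (s : seq 'rV['F_2]_n), prodL l (x :: s) = star (liftN (2^l) x) (prodL l s) by [].
elim: s => [//|x s IH]; rewrite [undup _]/=; case: ifP => xs; rewrite !pc IH //.
by rewrite prodL_mem.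
Qed.

Lemma perp_iff b : perpN (genset l beta1 beta2) b <->
  forall a, a \in beta2 -> @Rr n l beta1 (star (liftN (2^l) a) b) 0.
Proof.
split.
- move=> H a ab s ss; case: (leqP l (size s)) => ls.
    by apply: zero2.
  rewrite -prodL_undup.
  have H' : dot (prodL l (undup s)) (star (liftN (2 ^ l) a) b) *+ 2 ^ size (undup s) = 0.
    rewrite -dot_starMn; apply: H; exists a, (size (undup s)), (prodL l (undup s)); split => //.
      exact: leq_ltn_trans (size_undup s) ls.
    exists (undup s); split => //; first exact: undup_uniq.
    by move=> y; rewrite mem_undup => /ss.
  by rewrite add0n -(subnKC (size_undup s)) expnD mulrnA H' mul0rn.
- move=> H v [a [i [p [ab il [s [sz su ss pe]]]]]] ->.
  change (dot (star (liftN (2 ^ l) a) (p *+ 2 ^ i)) b = 0).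
  by rewrite dot_starMn pe -sz; apply: (H a ab s ss).
Qed.
End Perp.

Section CondZ.
Variables (n l : nat) (l0 : (0 < l)%N) (C1 C2 : {vspace 'rV['F_2]_n}) (beta1 beta2 : seq 'rV['F_2]_n).
Hypothesis span1 : <<beta1>>%VS = C1.
Hypothesis span2 : <<beta2>>%VS = C2.
Hypothesis sub21 : forall a, a \in beta2 -> a \in C1.
Variable b : 'rV['Z_(2^l)]_n.
Local Notation F y := (dot (liftN (2^l) y) b).

Lemma condZ_gen : (forall x c, x \in C1 -> c \in C2 -> F (x + c) = F x) <->
  (forall a, a \in beta2 -> forall x, x \in C1 -> F (x + a) = F x).
Proof.
split.
- move=> H a ab x xC; apply: H => //; rewrite -span2; exact: memv_span.
- move=> H x c xC; rewrite -span2 => cC; move: x xC.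
  pattern c; apply: (F2span_ind (P := fun c => forall x, x \in C1 -> F (x + c) = F x)) cC.
    by move=> x _; rewrite addr0.
  move=> g y gb Py x xC; rewrite addrA Py; last exact: memvD xC (sub21 gb).
  exact: H.
Qed.

Lemma condA a : a \in C1 -> (forall x, x \in C1 -> F (x + a) = F x) <->
  @Rr n l beta1 (star (liftN (2^l) a) b) 0.
Proof.
move=> aC; rewrite Rdec.
have E : dot (onesN n (2 ^ l)) (star (liftN (2 ^ l) a) b) = F a.
  by rewrite -dot_starC star_onesr.
rewrite E expn0 mulr1n.
have K1 := (@Klem n l l0 C1 beta1 span1 l (star (liftN (2 ^ l) a) b) 1%N (leq_addl _ _)).
split.
- move=> H.
  have Fa : F a = 0 by have := H 0 (mem0v _); rewrite add0r lift0 dot0l.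
  split => //; apply/K1 => x xC; rewrite expn1.
  have := H x xC; rewrite addrC dot_lift_add Fa add0r.
  by move/eqP; rewrite -subr_eq0 addrAC subrr add0r oppr_eq0 => /eqP.
- move=> [Fa /K1 Hs] x xC; rewrite addrC dot_lift_add Fa add0r.
  by have := Hs x xC; rewrite expn1 => ->; rewrite subr0.
Qed.
End CondZ.

Lemma F2_parity (R : realType) n (Fv : 'I_n -> 'F_2) :
  \prod_(i < n) (if Fv i != 0 then -1 else 1 : R[i]) = if \sum_(i < n) Fv i == 0 then 1 else -1.
Proof.
apply: (big_rec2 (fun p s => p = if s == 0 then 1 else -1)) => [|i p s _ ->]; first by rewrite eqxx.
case: (F2_cases (Fv i)) => ->; first by rewrite eqxx mul1r add0r.
case: (F2_cases s) => ->; by rewrite /= ?mulr1 ?mulrNN ?mulr1.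
Qed.

Lemma addF2_self n (x : 'rV['F_2]_n) : x + x = 0.
Proof.
apply/rowP => i; rewrite !mxE; case: (F2_cases (x 0 i)) => ->; first by rewrite addr0.
by apply: val_inj.
Qed.

Section Q.
Variables (R : realType) (n : nat) (C1 C2 : {vspace 'rV['F_2]_n}).
Hypothesis sub21 : (C2 <= C1)%VS.
Hypothesis DD : forall x, x \notin C1 -> exists2 v, dual2 C1 v & \sum_(i < n) v 0 i * x 0 i != 0.

Definition sgn (v y : 'rV['F_2]_n) : R[i] :=
  \prod_(i < n) (if (v 0 i != 0) && (y 0 i != 0) then -1 else 1).

Lemma sgnE v y : sgn v y = if \sum_(i < n) v 0 i * y 0 i == 0 then 1 else -1.
Proof.
rewrite /sgn -F2_parity; apply: eq_bigr => i _.
by rewrite mulf_eq0 negb_or.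
Qed.

Lemma sgn0 y : sgn 0 y = 1.
Proof. by rewrite /sgn big1 // => i _; rewrite mxE eqxx. Qed.

Lemma dual0 : dual2 C1 0.
Proof. by move=> c _; rewrite big1 // => i _; rewrite mxE mul0r. Qed.

Lemma CSS_inv (psi : state R n) : CSS C1 C2 psi -> forall x u, u \in C2 -> psi (x + u) = psi x.
Proof.
move=> H x u uC; have /ffunP/(_ x) := H u 0 uC dual0.
by rewrite !ffunE -/(sgn 0 (x + u)) sgn0 mul1r.
Qed.

Lemma CSS_supp (psi : state R n) : CSS C1 C2 psi -> forall x, x \notin C1 -> psi x = 0.
Proof.
move=> H x /DD [v dv nz]; have /ffunP/(_ x) := H 0 v (mem0v _) dv.
rewrite !ffunE addr0 -/(sgn v x) sgnE (negbTE nz) mulN1r.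
by move/eqP; rewrite eqNr => /eqP.
Qed.

Lemma CSS_char (psi : state R n) : (forall x, x \notin C1 -> psi x = 0) ->
  (forall x u, u \in C2 -> psi (x + u) = psi x) -> CSS C1 C2 psi.
Proof.
move=> H1 H2 u v uC dv; apply/ffunP => x; rewrite !ffunE -/(sgn v (x + u)) (H2 x u uC).
case: (boolP (x \in C1)) => xC; last by rewrite H1 // mulr0.
rewrite sgnE.
have -> : \sum_(i < n) v 0 i * (x + u) 0 i = 0.
  exact: dv (memvD xC (subvP sub21 _ uC)).
by rewrite eqxx mul1r.
Qed.

Lemma CSS_mul (g : 'rV['F_2]_n -> R[i]) (psi : state R n) :
  (forall x c, x \in C1 -> c \in C2 -> g (x + c) = g x) ->
  CSS C1 C2 psi -> CSS C1 C2 [ffun x => g x * psi x].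
Proof.
move=> Hg H; apply: CSS_char => [x xC|x u uC]; rewrite !ffunE.
  by rewrite (CSS_supp H xC) mulr0.
case: (boolP (x \in C1)) => xC; first by rewrite Hg // (CSS_inv H x uC).
have xuC : x + u \notin C1.
  apply: contra xC => xuC; rewrite -(addrK u x); exact: memvB xuC (subvP sub21 _ uC).
by rewrite (CSS_supp H xC) (CSS_supp H xuC) !mulr0.
Qed.

Variables (l : nat) (l0 : (0 < l)%N) (b : 'rV['Z_(2^l)]_n).

Definition fb (y : 'rV['F_2]_n) : R[i] :=
  \prod_(i < n) (if y 0 i != 0 then omega R (2^l) ^+ (val (b 0 i)) else 1).

Lemma l1 : (1 < 2 ^ l)%N.
Proof. by rewrite -{1}(expn0 2) ltn_exp2l. Qed.

Lemma fb_chi y : fb y = chi R (dot (liftN (2^l) y) b).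
Proof.
rewrite /dot (big_morph (chi R (N:=2^l)) (chiD R l1) (chi0 R (2^l))).
apply: eq_bigr => i _; rewrite mxE.
case: (F2_cases (y 0 i)) => ->; first by rewrite eqxx mul0r chi0.
by rewrite mul1r.
Qed.

Lemma fb_neq0 y : fb y != 0.
Proof. by rewrite fb_chi /chi expf_neq0 // omega_neq0 // l1. Qed.

Lemma HN_iff : HN R C1 C2 b <-> (forall x c, x \in C1 -> c \in C2 -> fb (x + c) = fb x).
Proof.
split.
- move=> H x c xC cC.
  pose psi : state R n := [ffun y => if y + x \in C2 then 1 else 0].
  have Hpsi : CSS C1 C2 psi.
    apply: CSS_char => [y yC|y u uC]; rewrite !ffunE.
      case: ifP => // yx; exfalso; move/negP: yC; apply.
      by rewrite -(addrK x y); apply: memvB (subvP sub21 _ yx) xC.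
    by rewrite addrAC (rpredDr _ uC).
  have HU : CSS C1 C2 (Uop b psi) by apply/(H (Uop b psi)); exists psi.
  have := CSS_inv HU x cC; rewrite !ffunE -/(fb (x + c)) -/(fb x).
  by rewrite addrAC addF2_self add0r cC mem0v !mulr1.
- move=> Hc phi; split.
  + move=> Hphi; exists [ffun x => (fb x)^-1 * phi x].
      apply: CSS_mul => // x c xC cC; by rewrite Hc.
    apply/ffunP => x; rewrite !ffunE -/(fb x) mulrA mulfV ?mul1r //; exact: fb_neq0.
  + move=> [psi Hpsi ->]; exact: (CSS_mul Hc Hpsi).
Qed.

End Q.

Lemma DD n (C1 : {vspace 'rV['F_2]_n}) (beta1 : seq 'rV['F_2]_n) :
  basis_of C1 beta1 -> forall x, x \notin C1 ->
  exists2 v, dual2 C1 v & \sum_(i < n) v 0 i * x 0 i != 0.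
Proof.
case/andP => /eqP span1 free1 x xC.
pose s := x :: beta1.
have fs : free s by rewrite free_cons span1 xC free1.
pose Y : 'M['F_2]_(size s, n) := \matrix_(j < size s) s`_j.
have rf : row_free Y.
  rewrite -kermx_eq0; apply/rowV0P => w /sub_kermxP wY.
  have Hs : \sum_(j < size s) w 0 j *: (in_tuple s)`_j = 0.
    rewrite -[RHS]wY mulmx_sum_row; apply: eq_bigr => j _; by rewrite rowK.
  apply/rowP => j; rewrite mxE; exact: (elimT (@freeP _ _ _ (in_tuple s)) fs (fun j => w 0 j) Hs j).
case/row_freeP: rf => B YB.
have key : forall j : 'I_(size s), \sum_(i < n) B i ord0 * s`_j 0 i = (j == ord0)%:R.
  move=> j; move/matrixP: YB => /(_ j ord0); rewrite !mxE => <-.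
  by apply: eq_bigr => i _; rewrite mxE mulrC.
have dv : forall c, c \in C1 -> \sum_(i < n) B i ord0 * c 0 i = 0.
  move=> c; rewrite -span1.
  apply: (F2span_ind (P := fun c => \sum_(i < n) B i ord0 * c 0 i = 0)).
    by rewrite big1 // => i _; rewrite mxE mulr0.
  move=> g y gb Py.
  rewrite (eq_bigr (fun i => B i ord0 * g 0 i + B i ord0 * y 0 i)); last first.
    by move=> i _; rewrite mxE mulrDr.
  rewrite big_split /= Py addr0.
  have jlt : ((index g beta1).+1 < size s)%N by rewrite /= ltnS index_mem.
  by have := key (Ordinal jlt); rewrite /= nth_index.
exists (\row_i B i ord0).
  move=> c cC; rewrite -[RHS](dv c cC); apply: eq_bigr => i _; by rewrite mxE.
have := key ord0; rewrite eqxx => k0.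
rewrite (eq_bigr (fun i => B i ord0 * x 0 i)); last by move=> i _; rewrite mxE.
by rewrite k0 oner_eq0.
Qed.

Local Close Scope complex_scope.

Theorem theorem3p2 (R : realType) (n l : nat)
  (C1 C2 : {vspace 'rV['F_2]_n}) (beta1 beta2 : seq 'rV['F_2]_n) :
  (0 < l)%N ->
  (C2 <= C1)%VS ->
  basis_of C1 beta1 -> basis_of C2 beta2 -> {subset beta2 <= beta1} ->
  forall b : 'rV['Z_(2 ^ l)]_n,
    HN R C1 C2 b <-> perpN (genset l beta1 beta2) b.
Proof.
move=> l0 sub21 bas1 bas2 sub12 b.
have span1 : <<beta1>>%VS = C1 by case/andP: bas1 => /eqP.
have span2 : <<beta2>>%VS = C2 by case/andP: bas2 => /eqP.
have sub2C1 : forall a, a \in beta2 -> a \in C1.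
  by move=> a ab; rewrite -span1 memv_span // sub12.
rewrite (HN_iff R sub21 (DD bas1) l0 b) perp_iff.
have l1' := l1 l0.
have E1 : (forall x c, x \in C1 -> c \in C2 -> fb R b (x + c) = fb R b x) <->
          (forall x c, x \in C1 -> c \in C2 ->
             dot (liftN (2^l) (x + c)) b = dot (liftN (2^l) x) b).
  split => H x c xC cC.
    by apply: (chi_inj (R := R) l1'); rewrite -!fb_chi //; apply: H.
  by rewrite !fb_chi // (H x c xC cC).
rewrite E1 (condZ_gen span2 sub2C1).
split => H a ab.
  by apply/(condA l0 span1 b (sub2C1 a ab))/H.
by apply/(condA l0 span1 b (sub2C1 a ab))/H.
exact: l0.
Qed.
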